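(* Let $0\le\ell\le r$ and let $a_1,b_1,\dots,a_s,b_s\ge0$ be integers with $\sum_{i=1}^s a_i+\sum_{i=1}^s b_i=\ell$. Put $k=\sum_{i=1}^s a_i$. Then the ideal $S^{a_1}L^{b_1}S^{a_2}L^{b_2}\cdots S^{a_s}L^{b_s}(p)\subseteq R_\ell$ (operators applied successively starting from $(p)=p\mathbb{Z}\subseteq R_0$) depends only on $k$, and $$S^{a_1}L^{b_1}\cdots S^{a_s}L^{b_s}(p)=S^kL^{\ell-k}(p)=L^{\ell-k}S^k(p)=J_{\ell,0}(p^{k+1}).$$
   Context: Fix a prime $p$ and an integer $r\ge0$. For $0\le k\le r$ let $R_k$ be the commutative ring which is free as a $\mathbb{Z}$-module with basis $X_{k,0},\dots,X_{k,k}$ and multiplication $X_{k,i}X_{k,j}=p^{k-\max(i,j)}X_{k,\min(i,j)}$; thus $X_{k,k}=1$, and an integer $n$ is identified with $nX_{k,k}$. For $0\le k\le\ell\le r$ define: the additive map $\mathrm{ind}^\ell_k:R_k\to R_\ell$, $X_{k,i}\mapsto X_{\ell,i}$; the ring homomorphism $\mathrm{res}^\ell_k:R_\ell\to R_k$, $\mathrm{res}^\ell_k(X_{\ell,i})=p^{\ell-k}X_{k,i}$ if $i\le k$ and $=p^{\ell-i}$ if $i\ge k$; and the multiplicative map $\mathrm{jnd}^\ell_k:R_k\to R_\ell$, $$\mathrm{jnd}^\ell_k\Big(\sum_{i=0}^k m_iX_{k,i}\Big)=m_kX_{\ell,\ell}+\sum_{k\le i<\ell}\frac{m_k^{p^{\ell-i}}-m_k^{p^{\ell-i-1}}}{p^{\ell-i}}X_{\ell,i}+\sum_{0\le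 i<k}\frac{(\sum_{s=i}^k m_sp^{k-s})^{p^{\ell-k}}-(\sum_{s=i+1}^k m_sp^{k-s})^{p^{\ell-k}}}{p^{\ell-i}}X_{\ell,i}$$ ($m_i\in\mathbb{Z}$). For $1\le k\le r$ and an ideal $I\subseteq R_{k-1}$: $L(I)=(\mathrm{res}^k_{k-1})^{-1}(I)\subseteq R_k$, and $S(I)$ is the ideal of $R_k$ generated by $\mathrm{ind}^k_{k-1}(I)\cup\mathrm{jnd}^k_{k-1}(I)$; $L^n,S^n$ are iterates (each step raising the index by one). For $0\le i\le\ell$, $F_{\ell,i}=X_{\ell,i}-p^{\ell-i}$; for $0\le k\le\ell$ and $x\in\mathbb{Z}$, $J_{\ell,k}(x)\subseteq R_\ell$ is the ideal generated by $x,F_{\ell,k},\dots,F_{\ell,\ell-1}$ if $k\le\ell-1$, and $J_{\ell,\ell}(x)=xR_\ell$. *)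

(* Defs.v *)
From HB Require Import structures.
From mathcomp Require Import all_boot all_order all_algebra.
Unset Printing Implicit Defensive.
Import Order.TTheory GRing.Theory Num.Theory.
Local Open Scope ring_scope.

(* The ring R_k, as the Z-module with basis X_{k,0},...,X_{k,k}:
   an element is its coefficient vector (x i = coefficient of X_{k,i}). *)
Definition R (k : nat) := {ffun 'I_k.+1 -> int}.

Definition coef (k : nat) (x : R k) (n : nat) : int :=
  if (n < k.+1)%N then x (inord n) else 0.

Definition zeroR (k : nat) : R k := [ffun _ => 0].
Definition addR (k : nat) (x y : R k) : R k := [ffun i => x i + y i].

Definition X (k : nat) (i : nat) : R k := [ffun j : 'I_k.+1 => ((j : nat) == i)%:R].

(* the integer n, identified with n X_{k,k} *)
Definition cst (k : nat) (n : int) : R k :=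
  [ffun j : 'I_k.+1 => if (j : nat) == k then n else 0].

(* multiplication: X_{k,i} X_{k,j} = p^(k - max(i,j)) X_{k,min(i,j)}, bilinear *)
Definition mulR (p k : nat) (x y : R k) : R k :=
  [ffun m : 'I_k.+1 => \sum_(i < k.+1) \sum_(j < k.+1)
      (if minn i j == m then x i * y j * (p ^ (k - maxn i j))%:Z else 0)].

Definition ind (k l : nat) (x : R k) : R l := [ffun i : 'I_l.+1 => coef k x i].

(* res^l_k : X_{l,i} |-> p^(l-k) X_{k,i} (i <= k), p^(l-i) (i >= k) *)
Definition res (p k l : nat) (y : R l) : R k :=
  [ffun j : 'I_k.+1 =>
     if (j < k)%N then (p ^ (l - k))%:Z * coef l y j
     else \sum_(k <= i < l.+1) (p ^ (l - i))%:Z * coef l y i].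

(* jnd^l_k (multiplicative map); divisions are exact integer divisions *)
Definition jnd (p k l : nat) (x : R k) : R l :=
  let m := coef k x in
  [ffun i : 'I_l.+1 =>
     if (i : nat) == l then m k
     else if (k <= i)%N then
       ((m k ^+ (p ^ (l - i)) - m k ^+ (p ^ (l - i - 1))) %/ (p ^ (l - i))%:Z)%Z
     else
       (((\sum_(i <= s < k.+1) m s * (p ^ (k - s))%:Z) ^+ (p ^ (l - k))
         - (\sum_(i.+1 <= s < k.+1) m s * (p ^ (k - s))%:Z) ^+ (p ^ (l - k)))
          %/ (p ^ (l - i))%:Z)%Z].

Definition ideal_eq (k : nat) (I J : R k -> Prop) : Prop := forall x, I x <-> J x.

Definition gen (p k : nat) (G : R k -> Prop) : R k -> Prop :=
  fun x => exists s : seq (R k * R k),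
    (forall q, q \in s -> G q.2) /\
    x = foldr (fun q acc => addR k (mulR p k q.1 q.2) acc) (zeroR k) s.

Definition Lop (p k : nat) (I : R k -> Prop) : R k.+1 -> Prop :=
  fun y => I (res p k k.+1 y).

Definition Sop (p k : nat) (I : R k -> Prop) : R k.+1 -> Prop :=
  gen p k.+1 (fun y => exists x, I x /\ (y = @ind k k.+1 x \/ y = @jnd p k k.+1 x)).

Definition pZ (p : nat) : R 0 -> Prop := gen p 0 (fun y => y = cst 0 (p%:Z)).

(* A word w of operators (true = S, false = L), head = outermost (leftmost)
   operator; word_ideal p l w is  w (p) subset of R_l  when size w = l. *)
Fixpoint word_ideal (p l : nat) (w : seq bool) {struct l} : R l -> Prop :=
  match l as l0 return R l0 -> Prop with
  | 0 => pZ p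
  | l'.+1 => match w with
    | b :: w' => (if b then @Sop p l' else @Lop p l') (@word_ideal p l' w')
    | [::] => fun _ => False end
  end.

Definition mixed_word (s : nat) (a b : 'I_s -> nat) : seq bool :=
  flatten [seq nseq (a i) true ++ nseq (b i) false | i <- enum 'I_s].

Definition F (p l i : nat) : R l := addR l (X l i) (cst l (- (p ^ (l - i))%:Z)).

Definition J (p l k : nat) (x : int) : R l -> Prop :=
  gen p l (fun y => y = cst l x \/ exists i : nat, (k <= i < l)%N /\ y = F p l i).

(* Main.v *)
Require Import Defs.
From HB Require Import structures.
From mathcomp Require Import all_boot all_order all_algebra.
From mathcomp Require Import zify ring lra.
Import Order.TTheory GRing.Theory Num.Theory.
Local Open Scope ring_scope.

Definition eps (p l : nat) (x : R l) : int :=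
  \sum_(i < l.+1) x i * (p ^ (l - i))%:Z.

Lemma coef_ord l (x : R l) (i : 'I_l.+1) : coef l x i = x i.
Proof. by rewrite /coef ltn_ord inord_val. Qed.

Lemma coef_ffun l (g : nat -> int) n :
  coef l [ffun i : 'I_l.+1 => g i] n = if (n < l.+1)%N then g n else 0.
Proof. by rewrite /coef; case: ifP => // h; rewrite ffunE inordK. Qed.

Lemma eps_nat p l (x : R l) :
  eps p l x = \sum_(0 <= i < l.+1) coef l x i * (p ^ (l - i))%:Z.
Proof. by rewrite big_mkord; apply: eq_bigr => i _; rewrite coef_ord. Qed.

Lemma addRE k (x y : R k) : addR k x y = x + y.
Proof. by apply/ffunP => i; rewrite !ffunE. Qed.
Lemma zeroRE k : zeroR k = 0.
Proof. by apply/ffunP => i; rewrite !ffunE. Qed.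

Lemma eps_add p l (x y : R l) : eps p l (x + y) = eps p l x + eps p l y.
Proof. by rewrite /eps -big_split; apply: eq_bigr => i _; rewrite ffunE mulrDl. Qed.
Lemma eps0 p l : eps p l 0 = 0.
Proof. by rewrite /eps big1 // => i _; rewrite ffunE mul0r. Qed.
Lemma eps_mulz p l (x : R l) c : eps p l (x *~ c) = eps p l x * c.
Proof.
rewrite /eps big_distrl; apply: eq_bigr => i _ /=.
by rewrite ffunMzE mulrzz mulrAC.
Qed.

Lemma expn_minmax (p i j l : nat) : (i <= l)%N -> (j <= l)%N ->
  (p ^ (l - maxn i j) * p ^ (l - minn i j) = p ^ (l - i) * p ^ (l - j))%N.
Proof.
by move=> hi hj; case: (leqP i j) => h //; rewrite mulnC.
Qed.

Lemma eps_mul p l (x y : R l) : eps p l (mulR p l x y) = eps p l x * eps p l y.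
Proof.
rewrite /eps /mulR.
under eq_bigr => m _ do rewrite ffunE big_distrl; rewrite exchange_big /=.
rewrite big_distrl; apply: eq_bigr => i _ /=.
under eq_bigr => m _ do rewrite big_distrl; rewrite exchange_big /=.
rewrite big_distrr; apply: eq_bigr => j _ /=.
rewrite (bigD1 (inord (minn i j))) //= big1; last first.
  move=> m hm; case: eqP => [he|]; last by rewrite mul0r.
  by case/eqP: hm; apply: val_inj; rewrite /= -he inordK // ltnS geq_min -ltnS ltn_ord.
have hm : (minn i j < l.+1)%N by rewrite ltnS geq_min -ltnS ltn_ord.
rewrite (inordK hm) eqxx addr0 -mulrA -PoszM.
rewrite expn_minmax; last by rewrite -ltnS ltn_ord. 2: by rewrite -ltnS ltn_ord.
by rewrite PoszM mulrACA.
Qed.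

Lemma foldr_sum p k (s : seq (R k * R k)) :
  foldr (fun q acc => addR k (mulR p k q.1 q.2) acc) (zeroR k) s =
  \sum_(q <- s) mulR p k q.1 q.2.
Proof.
elim: s => [|q s IH] /=; first by rewrite big_nil zeroRE.
by rewrite big_cons addRE IH.
Qed.

Lemma genE p k G x : gen p k G x <->
  exists s : seq (R k * R k), (forall q, q \in s -> G q.2) /\
    x = \sum_(q <- s) mulR p k q.1 q.2.
Proof.
by split=> -[s [h1 h2]]; exists s; split => //; rewrite h2 foldr_sum.
Qed.

Lemma mulR_mulzl p k (r g : R k) c : mulR p k (r *~ c) g = mulR p k r g *~ c.
Proof.
apply/ffunP => m; rewrite ffunMzE !ffunE mulrzz big_distrl; apply: eq_bigr => i _.
rewrite big_distrl; apply: eq_bigr => j _ /=.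
case: eqP => _; last by rewrite mul0r.
by rewrite ffunMzE mulrzz; ring.
Qed.

Lemma mulR_cst1 p k (g : R k) : mulR p k (cst k 1) g = g.
Proof.
apply/ffunP => m; rewrite ffunE (bigD1 ord_max) //= [X in _ + X]big1; last first.
  move=> i hi; rewrite big1 // => j _; rewrite ffunE.
  have -> : ((i : nat) == k) = false.
    by apply/negbTE; apply: contra hi => /eqP h; apply/eqP/val_inj.
  by rewrite !mul0r if_same.
rewrite addr0 (bigD1 m) //= [X in _ + X]big1; last first.
  move=> j hj; rewrite ffunE eqxx mul1r.
  have -> : minn k j = j by apply/minn_idPr; rewrite -ltnS ltn_ord.
  by case: eqP => // h; case/eqP: hj; apply/val_inj.
rewrite ffunE eqxx mul1r.
have -> : minn k m = m by apply/minn_idPr; rewrite -ltnS ltn_ord.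
have -> : maxn k m = k by apply/maxn_idPl; rewrite -ltnS ltn_ord.
by rewrite eqxx subnn expn0 mulr1 addr0.
Qed.

Lemma gen_add p k G x y : gen p k G x -> gen p k G y -> gen p k G (x + y).
Proof.
move=> /genE [s1 [h1 ->]] /genE [s2 [h2 ->]]; apply/genE; exists (s1 ++ s2).
split; last by rewrite big_cat.
by move=> q; rewrite mem_cat => /orP [] ?; [apply: h1 | apply: h2].
Qed.

Lemma gen_0 p k G : gen p k G 0.
Proof. by apply/genE; exists [::]; split => //; rewrite big_nil. Qed.

Lemma gen_mulz p k G x c : gen p k G x -> gen p k G (x *~ c).
Proof.
move=> /genE [s [h ->]]; apply/genE; exists [seq (q.1 *~ c, q.2) | q <- s].
split.
  by move=> q /mapP [q' hq' ->] /=; apply: h.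
rewrite big_map; elim: {h} s => [|q s IH]; first by rewrite !big_nil mul0rz.
by rewrite !big_cons /= -IH mulR_mulzl mulrzDl.
Qed.

Lemma gen_gen p k (G : R k -> Prop) g : G g -> gen p k G g.
Proof.
move=> hg; apply/genE; exists [:: (cst k 1, g)]; split.
  by move=> q; rewrite inE => /eqP -> /=.
by rewrite big_seq1 mulR_cst1.
Qed.

Lemma gen_sub p k (G : R k -> Prop) (d : int) :
  (forall g, G g -> (d %| eps p k g)%Z) ->
  forall x, gen p k G x -> (d %| eps p k x)%Z.
Proof.
move=> hG x /genE [s [h ->]].
rewrite (big_morph (eps p k) (@eps_add p k) (eps0 p k)).
rewrite big_seq; apply: (big_ind (fun z => (d %| z)%Z)) => //.

- by move=> a b ha hb; exact: rpredD.
by move=> q hq; rewrite eps_mul dvdz_mull // hG //; apply: h.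
Qed.

Lemma F_coord p l i (j : 'I_l.+1) :
  F p l i j = ((j : nat) == i)%:R + (if (j : nat) == l then - (p ^ (l - i))%:Z else 0).
Proof. by rewrite /F !ffunE. Qed.

Lemma cst_coord l d (j : 'I_l.+1) : cst l d j = if (j : nat) == l then d else 0.
Proof. by rewrite ffunE. Qed.

Lemma decomp_eq {p l} {y : R l} {t d} : eps p l y = t * d ->
  y = \sum_(0 <= i < l) F p l i *~ coef l y i + cst l d *~ t.
Proof.
move=> ht; apply/ffunP => j; rewrite ffunE sum_ffunE ffunMzE mulrzz cst_coord.
have [hj|hj] := eqVneq (j : nat) l.
  rewrite -coef_ord hj.
  have -> : \sum_(0 <= i < l) (F p l i *~ coef l y i) j =
            - \sum_(0 <= i < l) coef l y i * (p ^ (l - i))%:Z.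
    rewrite -sumrN big_nat_cond [RHS]big_nat_cond; apply: eq_bigr => i /andP [/andP [_ hi] _].
    rewrite ffunMzE mulrzz F_coord hj eqxx.
    have -> : (l == i) = false by apply/negbTE; rewrite neq_ltn hi orbT.
    by rewrite add0r mulNr mulrC.
  move: ht; rewrite eps_nat big_nat_recr //= subnn expn0 mulr1 => ht.
  by rewrite mulrC -ht; ring.
have hjl : (j < l)%N by rewrite ltn_neqAle hj -ltnS ltn_ord.
rewrite mul0r addr0 -coef_ord.
transitivity (\sum_(0 <= i < l | i == j) coef l y i); first by rewrite big_nat1_eq hjl.
rewrite big_mkcond; apply: eq_bigr => i _.
rewrite ffunMzE mulrzz F_coord (negbTE hj) addr0 eq_sym.
by case: eqP => _; rewrite ?mul1r ?mul0r.
Qed.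

Lemma decomp p l (P : R l -> Prop) (d : int) :
  (forall x y, P x -> P y -> P (x + y)) -> P 0 -> (forall x c, P x -> P (x *~ c)) ->
  P (cst l d) -> (forall i, (i < l)%N -> P (F p l i)) ->
  forall y, (d %| eps p l y)%Z -> P y.
Proof.
move=> hadd h0 hmul hd hF y /dvdzP [t ht].
rewrite (decomp_eq ht); apply: (hadd); last exact: (hmul).
rewrite big_nat; apply: (big_ind P) => // i /andP [_ hi].
by apply: (hmul); apply: hF.
Qed.

Lemma decomp_gen p l G (d : int) : gen p l G (cst l d) ->
  (forall i, (i < l)%N -> gen p l G (F p l i)) ->
  forall y, (d %| eps p l y)%Z -> gen p l G y.
Proof.
move=> hd hF; apply: decomp => //.
- exact: gen_add.
- exact: gen_0.
- move=> x c; exact: gen_mulz.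
Qed.

Lemma coef_cst l d n : coef l (cst l d) n = if n == l then d else 0.
Proof.
rewrite /cst (@coef_ffun l (fun n => if n == l then d else 0)); case: ifP => // h; case: eqP => // e.
by move: h; rewrite e ltnSn.
Qed.

Lemma coef_X l i n : coef l (X l i) n = if (n < l.+1)%N then (n == i)%:R else 0.
Proof. by rewrite /X (@coef_ffun l (fun n => (n == i)%:R)). Qed.

Lemma eps_cst p l d : eps p l (cst l d) = d.
Proof.
rewrite eps_nat big_nat_recr //= big_nat_cond big1; last first.
  by move=> i /andP [/andP [_ hi] _]; rewrite coef_cst (ltn_eqF hi) mul0r.
by rewrite coef_cst eqxx subnn expn0 mulr1 add0r.
Qed.

Lemma eps_X p l i : (i <= l)%N -> eps p l (X l i) = (p ^ (l - i))%:Z.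
Proof.
move=> hi; rewrite eps_nat.
transitivity (\sum_(0 <= n < l.+1 | n == i) (p ^ (l - n))%:Z).
  rewrite [RHS]big_mkcond; apply: eq_big_nat => n /andP [_ hn].
  by rewrite coef_X hn; case: eqP => _; rewrite ?mul1r ?mul0r.
by rewrite big_nat1_eq ltnS hi.
Qed.

Lemma eps_F p l i : (i <= l)%N -> eps p l (F p l i) = 0.
Proof.
by move=> hi; rewrite /F addRE eps_add eps_X // eps_cst addrN.
Qed.

Lemma powS (p n : nat) : (p ^ n.+1)%:Z = p%:Z * (p ^ n)%:Z.
Proof. by rewrite expnS PoszM. Qed.

Lemma coef_res p l (y : R l.+1) n : coef l (res p l l.+1 y) n =
  if (n < l)%N then (p ^ (l.+1 - l))%:Z * coef l.+1 y n
  else if n == l then \sum_(l <= i < l.+2) (p ^ (l.+1 - i))%:Z * coef l.+1 y i else 0.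
Proof.
rewrite {1}/coef; case: ifP => h.
  rewrite ffunE inordK //; case: ifP => // h2.
  by have -> : n == l by rewrite eqn_leq -ltnS h leqNgt h2.
have h1 : (n < l)%N = false by move: h; lia.
have h2 : (n == l) = false by move: h; lia.
by rewrite h1 h2.
Qed.

Lemma coef_over l (x : R l) n : (l < n)%N -> coef l x n = 0.
Proof. by move=> h; rewrite /coef ltnNge h. Qed.

Lemma coef_ind k l (x : R k) n : coef l (ind k l x) n = if (n < l.+1)%N then coef k x n else 0.
Proof. by rewrite /coef; case: ifP => h //; rewrite ffunE inordK. Qed.

Lemma eps_res p l (y : R l.+1) : eps p l (res p l l.+1 y) = eps p l.+1 y.
Proof.
rewrite !eps_nat big_nat_recr //= [in RHS]big_nat_recr //= [in RHS]big_nat_recr //=.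
rewrite -addrA; congr (_ + _).
  apply: eq_big_nat => j /andP [_ hj].
  rewrite coef_res hj.
  have e1 : (l.+1 - l = 1)%N by lia.
  have e2 : (l.+1 - j = (l - j).+1)%N by lia.
  by rewrite e1 e2 expn1 powS; ring.
rewrite coef_res ltnn eqxx subnn expn0 mulr1.
rewrite big_nat_recr ?leqnSn //= big_nat1.
have e1 : (l.+1 - l = 1)%N by lia.
by rewrite e1 subnn expn1 expn0; ring.
Qed.

Lemma eps_ind p l (x : R l) : eps p l.+1 (ind l l.+1 x) = p%:Z * eps p l x.
Proof.
rewrite !eps_nat big_nat_recr //= coef_ind ltnSn coef_over // mul0r addr0 mulr_sumr.
apply: eq_big_nat => j /andP [_ hj].
rewrite coef_ind (ltn_trans hj (ltnSn _)) subSn // powS; ring.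
Qed.

Lemma dvd_subXX (d a b : int) n : (d %| a - b)%Z -> (d %| a ^+ n - b ^+ n)%Z.
Proof. by move=> h; rewrite subrXX dvdz_mulr. Qed.

Lemma fermat_nat p n : prime p -> (p %| (n ^ p)%:Z - n%:Z)%Z.
Proof.
move=> hp; have p0 : (0 < p)%N by apply: prime_gt0.
have hle : (n <= n ^ p)%N.
  case: n => // n; rewrite -{1}(expn1 n.+1) leq_pexp2l //.
have := fermat_little n hp; move/eqP; rewrite eqn_mod_dvd // => h.
by rewrite subzn // dvdzE /=.
Qed.

Lemma fermat_int p (m : int) : prime p -> (p %| m ^+ p - m)%Z.
Proof.
move=> hp; have p0 : (p%:Z != 0) by rewrite eqz_nat -lt0n prime_gt0.
set r := (m %% p)%Z.
have hr : 0 <= r by apply: modz_ge0.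
have hmr : (p %| m - r)%Z.
  by rewrite {1}(divz_eq m p) addrK dvdz_mull // dvdzz.
have -> : m ^+ p - m = (m ^+ p - r ^+ p) + (r ^+ p - r) + (r - m) by ring.
apply: rpredD; first apply: rpredD.
- exact: dvd_subXX.
- case: r hr {hmr} => [n|n] hr //; rewrite -natz -natrX !natz; exact: fermat_nat.
by rewrite -opprB rpredN.
Qed.

Lemma pow_cong p e (a b : int) : prime p -> (0 < e)%N ->
  ((p ^ e)%:Z %| a - b)%Z -> ((p ^ e.+1)%:Z %| a ^+ p - b ^+ p)%Z.
Proof.
move=> hp he h.
have hpab : (p %| a - b)%Z.
  apply: dvdz_trans h; rewrite dvdzE /= dvdn_exp // dvdnn.
rewrite subrXX expnSr PoszM dvdz_mul //.
set S := \sum_(i < p) _.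
have -> : S = \sum_(i < p) (a ^+ (p.-1 - i) * b ^+ i - b ^+ p.-1) + (p%:Z * b ^+ p.-1).
  by rewrite sumrB sumr_const card_ord -mulr_natl /= natz subrK.
rewrite rpredD // ?dvdz_mulr ?dvdzz //.
apply: rpred_sum => i _.
have -> : b ^+ p.-1 = b ^+ i * b ^+ (p.-1 - i).
  by rewrite -exprD subnKC // -ltnS prednK ?prime_gt0.
rewrite mulrC -mulrBr dvdz_mull //; exact: dvd_subXX.
Qed.

Definition Aj p l (x : R l) (i : nat) : int :=
  \sum_(i <= s < l.+1) coef l x s * (p ^ (l - s))%:Z.

Lemma coef_jnd_lt p l (x : R l) j : (j < l)%N ->
  coef l.+1 (jnd p l l.+1 x) j =
  ((Aj p l x j ^+ p - Aj p l x j.+1 ^+ p) %/ (p ^ (l.+1 - j))%:Z)%Z.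
Proof.
move=> hj; have hj2 : (j < l.+2)%N by lia.
rewrite {1}/coef hj2 /jnd ffunE inordK //=.
have -> : (j == l.+1) = false by lia.
have -> : (l <= j)%N = false by lia.
by rewrite subSnn expn1.
Qed.

Lemma coef_jnd_l p l (x : R l) :
  coef l.+1 (jnd p l l.+1 x) l =
  ((coef l x l ^+ p - coef l x l) %/ p%:Z)%Z.
Proof.
rewrite {1}/coef ltnS leqnSn /jnd ffunE inordK //=.
have -> : (l == l.+1) = false by lia.
by rewrite leqnn subSnn subnn expn1 expn0 expr1.
Qed.

Lemma coef_jnd_top p l (x : R l) :
  coef l.+1 (jnd p l l.+1 x) l.+1 = coef l x l.
Proof. by rewrite {1}/coef ltnSn /jnd ffunE inordK //= eqxx. Qed.

Lemma Aj_step p l (x : R l) j : (j <= l)%N ->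
  Aj p l x j = coef l x j * (p ^ (l - j))%:Z + Aj p l x j.+1.
Proof. by move=> h; rewrite /Aj big_ltn. Qed.

Lemma Aj_l p l (x : R l) : Aj p l x l = coef l x l.
Proof. by rewrite /Aj big_nat1 subnn expn0 mulr1. Qed.

Lemma Aj_0 p l (x : R l) : Aj p l x 0 = eps p l x.
Proof. by rewrite eps_nat. Qed.

Lemma eps_jnd p l (x : R l) : prime p -> eps p l.+1 (jnd p l l.+1 x) = eps p l x ^+ p.
Proof.
move=> hp.
rewrite eps_nat big_nat_recr //= big_nat_recr //= coef_jnd_top coef_jnd_l subnn expn0 mulr1.
have e1 : (l.+1 - l = 1)%N by lia.
rewrite e1 expn1 divzK ?fermat_int //.
have -> : \sum_(0 <= j < l) coef l.+1 (jnd p l l.+1 x) j * (p ^ (l.+1 - j))%:Z =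
          \sum_(0 <= j < l) (Aj p l x j ^+ p - Aj p l x j.+1 ^+ p).
  apply: eq_big_nat => j /andP [_ hj]; rewrite coef_jnd_lt // divzK //.
  have -> : (l.+1 - j = (l - j).+1)%N by lia.
  apply: pow_cong => //; first lia.
  by rewrite Aj_step ?(ltnW hj) // addrK dvdz_mull // dvdzz.
rewrite (@telescope_sumr_eq _ 0 l (fun k => - Aj p l x k ^+ p)) //; last first.
  by move=> k _; rewrite opprK addrC.
rewrite Aj_l -Aj_0; ring.
Qed.

Lemma R_ext l (x y : R l) : (forall n, (n < l.+1)%N -> coef l x n = coef l y n) -> x = y.
Proof.
move=> h; apply/ffunP => i; rewrite -!coef_ord; exact: h.
Qed.

Lemma coef_add l (x y : R l) n : coef l (x + y) n = coef l x n + coef l y n.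
Proof. by rewrite /coef; case: ifP => _; rewrite ?ffunE ?addr0. Qed.



Lemma coef_mulz l (x : R l) c n : coef l (x *~ c) n = coef l x n * c.
Proof. by rewrite /coef; case: ifP => _; rewrite ?ffunMzE ?mulrzz ?mul0r. Qed.

Lemma coef_sub l (x y : R l) n : coef l (x - y) n = coef l x n - coef l y n.
Proof. by rewrite -mulrN1z coef_add coef_mulz mulrN1. Qed.

Lemma coef_F p l i n : (n < l.+1)%N ->
  coef l (F p l i) n = (n == i)%:R - (if n == l then (p ^ (l - i))%:Z else 0).
Proof.
move=> h; rewrite /F addRE coef_add coef_X coef_cst h.
by case: (n == l); rewrite ?subr0 ?addr0.
Qed.

Lemma Posz_exp (p n : nat) : (p ^ n)%:Z = (p%:Z) ^+ n.
Proof. by rewrite -!natz natrX. Qed.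

Lemma Fi_eq p l i : (i < l)%N ->
  F p l.+1 i = ind l l.+1 (F p l i) + F p l.+1 l *~ (p ^ (l - i))%:Z.
Proof.
move=> hi; apply: R_ext => n hn.
rewrite coef_add coef_mulz coef_ind hn.
have [->|hn'] := eqVneq n l.+1.
  rewrite (@coef_over l (F p l i)) // !coef_F // !eqxx.
  have -> : (l.+1 == i) = false by lia.
  have -> : (l.+1 - i = (l - i).+1)%N by lia.
  have -> : (l.+1 - l = 1)%N by lia.
  have -> : (l.+1 == l) = false by lia.
  rewrite /= powS expn1; ring.
have hn2 : (n < l.+1)%N by lia.
rewrite !coef_F // (negbTE hn') subr0.
have [->|hnl] := eqVneq n l.
  have -> : (l == i) = false by lia.
  by rewrite /=; ring.
by rewrite /=; ring.
Qed.

Lemma cst_eq p l m : cst l.+1 (p ^ m.+1)%:Z =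
  ind l l.+1 (cst l (p ^ m)%:Z) - F p l.+1 l *~ (p ^ m)%:Z.
Proof.
apply: R_ext => n hn.
rewrite coef_sub coef_mulz coef_ind hn coef_F // !coef_cst.
have [->|hn'] := eqVneq n l.+1.
  have -> : (l.+1 == l) = false by lia.
  have -> : (l.+1 - l = 1)%N by lia.
  rewrite /= expn1 powS; ring.
have hn2 : (n < l.+1)%N by lia.
by case: (n == l) => /=; ring.
Qed.

Lemma prime_q p : prime p -> exists q, p = q.+2.
Proof. move=> hp; have : (1 < p)%N by apply: prime_gt1.
case: p {hp} => [|[|q]] // _; by exists q. Qed.

Lemma Fl_zero p : prime p ->
  F p 1 0 = ind 0 1 (cst 0 p%:Z) *~ ((p%:Z) ^+ (p - 2)) - jnd p 0 1 (cst 0 p%:Z).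
Proof.
move=> hp; have [q hq] := prime_q p hp.
apply: R_ext => n hn.
rewrite coef_sub coef_mulz coef_ind hn.
case: n hn => [|[|n]] hn //.
  rewrite coef_jnd_l coef_F // !coef_cst /= hq.
  have -> : (q.+2 - 2 = q)%N by lia.
  have -> : (q.+2%:Z) ^+ q.+2 - q.+2%:Z = ((q.+2%:Z) ^+ q.+1 - 1) * q.+2%:Z.
    by rewrite exprS; ring.
  rewrite mulzK //; rewrite exprS; ring.
rewrite coef_jnd_top coef_F // !coef_cst /=.
by rewrite expn1; ring.
Qed.

Lemma Aj_z p l j : (j <= l)%N -> Aj p l.+1 (F p l.+1 l) j = 0.
Proof.
move=> hj; rewrite /Aj (@big_cat_nat _ _ _ l) //=; last by lia.
rewrite big_nat_cond big1 ?add0r; last first.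
  move=> s /andP [/andP [_ hs] _]; rewrite coef_F; last by lia.
  have -> : (s == l) = false by lia.
  have -> : (s == l.+1) = false by lia.
  by rewrite /= subr0 mul0r.
rewrite big_ltn // big_nat1 !coef_F // eqxx.
have -> : (l == l.+1) = false by lia.
have -> : (l.+1 == l) = false by lia.
have -> : (l.+1 - l = 1)%N by lia.
by rewrite subnn /= expn0 expn1 mulr1 eqxx; ring.
Qed.

Lemma Aj_z1 p l : Aj p l.+1 (F p l.+1 l) l.+1 = - p%:Z.
Proof.
rewrite Aj_l coef_F // eqxx.
have -> : (l.+1 == l) = false by lia.
have -> : (l.+1 - l = 1)%N by lia.
by rewrite /= expn1 add0r.
Qed.

Lemma Fl_succ p l : prime p ->
  F p l.+2 l.+1 = jnd p l.+1 l.+2 (F p l.+1 l) +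
    ind l.+1 l.+2 (F p l.+1 l) *~ ((-1) ^+ p * (p%:Z) ^+ (p - 2)).
Proof.
move=> hp; have [q hq] := prime_q p hp.
apply: R_ext => n hn.
rewrite coef_add coef_mulz coef_ind hn.
have [->|hn1] := eqVneq n l.+2.
  rewrite coef_jnd_top (@coef_over l.+1 (F p l.+1 l) l.+2) // !coef_F // !eqxx.
  have -> : (l.+2 == l.+1) = false by lia.
  have -> : (l.+1 == l) = false by lia.
  have -> : (l.+2 - l.+1 = 1)%N by lia.
  have -> : (l.+1 - l = 1)%N by lia.
  by rewrite /= expn1; ring.
have [->|hn2] := eqVneq n l.+1.
  rewrite coef_jnd_l !coef_F // !eqxx.
  have -> : (l.+1 == l) = false by lia.
  have -> : (l.+1 - l = 1)%N by lia.
  have -> : (l.+1 == l.+2) = false by lia.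
  rewrite /= expn1 !add0r hq.
  have -> : (q.+2 - 2 = q)%N by lia.
  have -> : (- q.+2%:Z) ^+ q.+2 - - q.+2%:Z =
            ((-1) ^+ q.+2 * q.+2%:Z ^+ q.+1 + 1) * q.+2%:Z.
    by rewrite (exprNn (q.+2%:Z)) !exprS; ring.
  by rewrite mulzK // !exprS; ring.
have hnl : (n < l.+1)%N by lia.
rewrite coef_jnd_lt // !coef_F //.
rewrite (negbTE hn2).
have -> : (n == l.+2) = false by lia.
have [->|hn3] := eqVneq n l.
  rewrite Aj_z // Aj_z1 /= hq.
  have -> : (q.+2 - 2 = q)%N by lia.
  have -> : (l.+2 - l = 2)%N by lia.
  have -> : (0 : int) ^+ q.+2 - (- q.+2%:Z) ^+ q.+2 =
            (- ((-1) ^+ q.+2 * q.+2%:Z ^+ q)) * (q.+2 ^ 2)%N%:Z.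
    by rewrite exprS mul0r (exprNn (q.+2%:Z)) Posz_exp !exprS; ring.
  by rewrite mulzK // !exprS; ring.
have h1 : (n <= l)%N by lia.
have h2 : (n.+1 <= l)%N by lia.
rewrite (@Aj_z p l n h1) (@Aj_z p l n.+1 h2) expr0n /= subrr mul0r addr0.
by rewrite [X in (X %/ _)%Z]subrr div0z.
by lia.
Qed.

Definition E p l (d : int) : R l -> Prop := fun y => (d %| eps p l y)%Z.

Lemma J_E p l d : ideal_eq l (J p l 0 d) (E p l d).
Proof.
move=> y; split.
- apply: gen_sub => g [->|[i [/andP [_ hi] ->]]].
  + by rewrite eps_cst dvdzz.
  + by rewrite eps_F ?(ltnW hi) // dvdz0.
- apply: decomp_gen.
  + by apply: gen_gen; left.
  + by move=> i hi; apply: gen_gen; right; exists i.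
Qed.

Lemma pZ_E p : ideal_eq 0 (pZ p) (E p 0 p%:Z).
Proof.
move=> y; split.
- by apply: gen_sub => g ->; rewrite eps_cst dvdzz.
- apply: decomp_gen => //; by apply: gen_gen.
Qed.

Lemma Lop_E p l I d : ideal_eq l I (E p l d) -> ideal_eq l.+1 (Lop p l I) (E p l.+1 d).
Proof.
move=> h y; rewrite /Lop; split.
- by move/h; rewrite /E eps_res.
- by move=> hy; apply/h; rewrite /E eps_res.
Qed.

Lemma dvd_pow_nat (p a b : nat) : (a <= b)%N -> ((p ^ a)%:Z %| (p ^ b)%:Z)%Z.
Proof. by move=> h; rewrite dvdzE /= dvdn_exp2l. Qed.

Lemma Sop_E p l I m : prime p -> (0 < m)%N -> (0 < l)%N \/ m = 1%N ->
  ideal_eq l I (E p l (p ^ m)%:Z) ->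
  ideal_eq l.+1 (Sop p l I) (E p l.+1 (p ^ m.+1)%:Z).
Proof.
move=> hp hm hl hI.
pose G := (fun y0 : R l.+1 => exists x, I x /\ (y0 = ind l l.+1 x \/ y0 = jnd p l l.+1 x)).
have gI : forall x, I x -> gen p l.+1 G (ind l l.+1 x) /\ gen p l.+1 G (jnd p l l.+1 x).
  by move=> x hx; split; apply: gen_gen; exists x; split => //; [left | right].
have hFl : gen p l.+1 G (F p l.+1 l).
  move: G gI; case: l I hl hI => [|l'] I hl hI G gI.
    have hm1 : m = 1%N by case: hl.
    have hz : I (cst 0 p%:Z) by apply/hI; rewrite /E eps_cst hm1 expn1 dvdzz.
    have [h1 h2] := gI _ hz.
    rewrite Fl_zero // -mulrN1z; apply: gen_add; exact: gen_mulz.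
  have hz : I (F p l'.+1 l') by apply/hI; rewrite /E eps_F // dvdz0.
  have [h1 h2] := gI _ hz.
  rewrite Fl_succ //; apply: gen_add => //; exact: gen_mulz.
move=> y; split.
- apply: gen_sub => g [x [/hI hx [->|->]]].
  + by rewrite eps_ind expnSr PoszM mulrC dvdz_mul // dvdzz.
  + rewrite eps_jnd //.
    apply: (@dvdz_trans ((p ^ (m * p))%:Z)).
      have [q hq] := prime_q p hp.
      by apply: dvd_pow_nat; rewrite hq; nia.
    by rewrite expnM Posz_exp dvdz_exp2r.
- apply: decomp_gen.
  + have hz : I (cst l (p ^ m)%:Z) by apply/hI; rewrite /E eps_cst dvdzz.
    have [h1 _] := gI _ hz.
    rewrite cst_eq -mulrN1z; apply: gen_add => //; do 2 apply: gen_mulz => //.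
  + move=> i hi; have [->|hil] := eqVneq i l; first exact: hFl.
    have hil' : (i < l)%N by lia.
    have hz : I (F p l i) by apply/hI; rewrite /E eps_F ?(ltnW hil') // dvdz0.
    have [h1 _] := gI _ hz.
    rewrite Fi_eq //; apply: gen_add => //; exact: gen_mulz.
Qed.

Lemma word_E p : prime p -> forall l w, size w = l ->
  ideal_eq l (word_ideal p l w) (E p l (p ^ (count id w).+1)%:Z).
Proof.
move=> hp; elim=> [|l IH] [|b w] //= hs.
  by rewrite expn1; apply: pZ_E.
have hw : size w = l by case: hs.
have IHw := IH w hw.
case: b => /=.
  apply: Sop_E => //.
  case: l {IH IHw hs} hw => [|l] hw; last by left.
  by right; case: w hw.
exact: Lop_E.
Qed.

Lemma ideal_eq_trans {l} {I J K : R l -> Prop} :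
  ideal_eq l I J -> ideal_eq l J K -> ideal_eq l I K.
Proof. by move=> h1 h2 x; rewrite h1 h2. Qed.

Lemma ideal_eq_sym {l} {I J : R l -> Prop} : ideal_eq l I J -> ideal_eq l J I.
Proof. by move=> h x; rewrite h. Qed.

Lemma mixed_size s (a b : 'I_s -> nat) :
  size (mixed_word s a b) = (\sum_(i < s) a i + \sum_(i < s) b i)%N.
Proof.
rewrite /mixed_word size_flatten /shape -map_comp sumnE big_map big_enum /=.
by rewrite -big_split /=; apply: eq_bigr => i _; rewrite size_cat !size_nseq.
Qed.

Lemma mixed_count s (a b : 'I_s -> nat) :
  count id (mixed_word s a b) = (\sum_(i < s) a i)%N.
Proof.
rewrite /mixed_word count_flatten -map_comp sumnE big_map big_enum /=.
by apply: eq_bigr => i _; rewrite count_cat !count_nseq /= mul1n mul0n addn0.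
Qed.

Theorem proposition6 (p : nat) (hp : prime p) (r l s : nat) (a b : 'I_s -> nat)
  (hlr : (l <= r)%N)
  (hsum : (\sum_(i < s) a i + \sum_(i < s) b i)%N = l) :
  let k := (\sum_(i < s) a i)%N in
  ideal_eq l (word_ideal p l (mixed_word s a b))
           (word_ideal p l (nseq k true ++ nseq (l - k) false)) /\
  ideal_eq l (word_ideal p l (nseq k true ++ nseq (l - k) false))
           (word_ideal p l (nseq (l - k) false ++ nseq k true)) /\
  ideal_eq l (word_ideal p l (nseq (l - k) false ++ nseq k true))
           (J p l 0 (p ^ k.+1)%:Z).
Proof.
move=> k.
have hk : (k <= l)%N by rewrite -hsum leq_addr.
have h1 := word_E p hp _ _ (etrans (mixed_size s a b) hsum); rewrite mixed_count -/k in h1.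
have s2 : size (nseq k true ++ nseq (l - k) false) = l.
  by rewrite size_cat !size_nseq subnKC.
have s3 : size (nseq (l - k) false ++ nseq k true) = l.
  by rewrite size_cat !size_nseq subnK.
have h2 := word_E p hp _ _ s2; have h3 := word_E p hp _ _ s3.
rewrite count_cat !count_nseq /= mul1n mul0n addn0 in h2.
rewrite count_cat !count_nseq /= mul1n mul0n add0n in h3.
split; first exact: ideal_eq_trans h1 (ideal_eq_sym h2).
split; first exact: ideal_eq_trans h2 (ideal_eq_sym h3).
exact: ideal_eq_trans h3 (ideal_eq_sym (J_E p l _)).
Qed.
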